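(* Let $p>0$ and let $f$ be a $p$-knowable Boolean function. Then for every $k\in\mathbb N$, $$I_k(f)\le\frac{\mathbb E[(\max W(f))^p]}{k^p}.$$
   Context: Let $\Omega=\{-1,1\}$ and $\Omega^\infty=\{-1,1\}^{\mathbb N}$ with the uniform product probability measure; $\omega$ denotes a uniformly random element. A Boolean function is a measurable map $f:\Omega^\infty\to\Omega$. $\omega^{(k)}$ is $\omega$ with bit $k$ flipped; $I_k(f)=\mathbb P(f(\omega^{(k)})\ne f(\omega))$. A set $W\subseteq\mathbb N$ is a witness set for $f$ at $\omega$ if there is an event $A$ with $\mathbb P(A)=1$ such that for all $\tilde\omega\in A$: if $\tilde\omega_i=\omega_i$ for all $i\in W$ then $f(\tilde\omega)=f(\omega)$. $f$ is finitary if almost surely a finite witness set exists; then $W(f)(\omega)$ denotes the least finite witness set in the order: smaller maximum first, then smaller cardinality, then lexicographic. $f$ is $p$-knowable if it is finitary and $\mathbb E[(\max W(f))^p]<\infty$. *)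

(* Defs.v *)
From HB Require Import structures.
From mathcomp Require Import all_boot all_order all_algebra finmap.
From mathcomp Require Import all_classical all_reals all_analysis.

Set Implicit Arguments.
Unset Strict Implicit.
Unset Printing Implicit Defensive.
Import Order.TTheory GRing.Theory Num.Theory.

Local Open Scope classical_set_scope.
Local Open Scope ring_scope.

(* Omega = {-1,1} is encoded by bool (true <-> 1, false <-> -1).
   Omega^infty = {-1,1}^N with N = {1,2,3,...}: a sample point is
   w : nat -> bool, where the paper's coordinate omega_i (i >= 1) is
   stored at position i.-1, see [coord]. *)
Definition Omega := nat -> bool.

Definition coord (w : Omega) (i : nat) : bool := w i.-1.

Definition coord_events : set (set Omega) :=
  [set A | exists i b, A = [set w | w i = b]].

Definition OmegaM := g_sigma_algebraType coord_events.

(* P is the uniform product measure: every cylinder fixing the first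
   n coordinates has probability 2^-n.  (These cylinders form a pi-system
   generating the product sigma-algebra, so this determines P uniquely.) *)
Definition uniform_product {R : realType} (P : probability OmegaM R) : Prop :=
  forall (n : nat) (v : Omega),
    P [set w : OmegaM | forall i, (i < n)%N -> w i = v i] = ((2%:R ^- n : R))%:E.

Definition flip (k : nat) (w : Omega) : Omega :=
  fun j => if j == k.-1 then ~~ w j else w j.

Definition boolean_function (f : OmegaM -> bool) : Prop :=
  measurable [set w : OmegaM | f w].

Definition influence {R : realType} (P : probability OmegaM R)
  (f : OmegaM -> bool) (k : nat) : \bar R :=
  P [set w : OmegaM | f (flip k w) != f w].

(* W (a set of paper indices, i.e. of positive naturals) is a witness set
   for f at w *)
Definition witness {R : realType} (P : probability OmegaM R)
  (f : OmegaM -> bool) (w : OmegaM) (W : set nat) : Prop :=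
  exists A : set OmegaM, measurable A /\ P A = 1%E /\
    forall v : OmegaM, A v ->
      (forall i, W i -> coord v i = coord w i) -> f v = f w.

Definition fin_witness {R : realType} (P : probability OmegaM R)
  (f : OmegaM -> bool) (w : OmegaM) (W : {fset nat}) : Prop :=
  (forall i, i \in W -> (0 < i)%N) /\ witness P f w [set` W].

Definition finitary {R : realType} (P : probability OmegaM R)
  (f : OmegaM -> bool) : Prop :=
  {ae P, forall w, exists W : {fset nat}, fin_witness P f w W}.

(* max of a finite set of positive naturals (0 for the empty set) *)
Definition fmax (W : {fset nat}) : nat := \max_(i <- W) i.

Fixpoint lexlt (s t : seq nat) : bool :=
  match s, t with
  | [::], _ :: _ => true
  | x :: s', y :: t' => (x < y)%N || ((x == y) && lexlt s' t')
  | _, _ => false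
  end.

Definition Wle (W1 W2 : {fset nat}) : bool :=
  (W1 == W2) ||
  [|| (fmax W1 < fmax W2)%N,
      (fmax W1 == fmax W2) && (#|` W1| < #|` W2|)%N |
      [&& fmax W1 == fmax W2, #|` W1| == #|` W2| &
          lexlt (sort leq W1) (sort leq W2)]].

(* W(f)(w): the least finite witness set (fset0 if none exists) *)
Definition Wf {R : realType} (P : probability OmegaM R)
  (f : OmegaM -> bool) (w : OmegaM) : {fset nat} :=
  xget fset0 [set W | fin_witness P f w W /\
                      forall W', fin_witness P f w W' -> Wle W W'].

Definition EmaxWp {R : realType} (P : probability OmegaM R)
  (f : OmegaM -> bool) (p : R) : \bar R :=
  (\int[P]_w (((fmax (Wf P f w))%:R : R) `^ p)%:E)%E.

Definition knowable {R : realType} (P : probability OmegaM R)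
  (f : OmegaM -> bool) (p : R) : Prop :=
  finitary P f /\ (EmaxWp P f p < +oo)%E.

(* Main.v *)
Require Import Defs.
From HB Require Import structures.
From mathcomp Require Import all_boot all_order all_algebra finmap.
From mathcomp Require Import all_classical all_reals all_analysis.
From mathcomp Require Import zify ring lra.
Import Order.TTheory GRing.Theory Num.Theory.
Local Open Scope classical_set_scope.
Local Open Scope ring_scope.

Lemma measurableE : @measurable _ OmegaM = <<s coord_events >>.
Proof. by []. Qed.

Definition cyl (n : nat) (v : Omega) : set OmegaM :=
  [set w : OmegaM | forall i, (i < n)%N -> w i = v i].

Lemma coord_meas i b : measurable [set w : OmegaM | w i = b].
Proof. by apply: sub_sigma_algebra; exists i, b. Qed.

Lemma cyl_meas n v : measurable (cyl n v).
Proof.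
elim: n => [|n IH].
  rewrite (_ : cyl 0 v = setT); first exact: measurableT.
  by apply/seteqP; split => w //= _ i.
rewrite (_ : cyl n.+1 v = cyl n v `&` [set w | w n = v n]).
  exact: measurableI (coord_meas _ _).
apply/seteqP; split => w /=.
  by move=> H; split; [move=> i Hi; apply: H; lia | apply: H].
move=> [H1 H2] i; rewrite ltnS leq_eqVlt => /orP[/eqP->//|]; exact: H1.
Qed.

Definition cylG : set (set OmegaM) := [set A | A = set0 \/ exists n v, A = cyl n v].

Definition tail_pat (n : nat) (v : Omega) (m : nat) : set OmegaM :=
  [set w : OmegaM | forall i, (m <= i < n)%N -> w i = v i].

Lemma tail_pat_G n m : (m < n)%N -> forall v,
  @measurable _ (g_sigma_algebraType cylG) (tail_pat n v m).
Proof.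
elim: m => [|m IH] Hm v.
  apply: sub_sigma_algebra; right; exists n, v.
  by apply/seteqP; split => w /= H i Hi; apply: H.
pose v' : Omega := fun l => if l == m then ~~ v m else v l.
rewrite (_ : tail_pat n v m.+1 = tail_pat n v m `|` tail_pat n v' m).
  apply: measurableU; apply: IH; lia.
apply/seteqP; split => w /=.
  move=> H; case: (boolP (w m == v m)) => [/eqP Hwm|Hwm].
    left => i /andP[Hi1 Hi2]; move: Hi1; rewrite leq_eqVlt => /orP[/eqP<-//|Hi1].
    by apply: H; rewrite Hi1.
  right => i /andP[Hi1 Hi2]; rewrite /v'; case: eqP => [->|Hne].
    by move: Hwm; case: (w m); case: (v m).
  by apply: H; apply/andP; split => //; lia.
move=> [] H i /andP[Hi1 Hi2].
  by apply: H; rewrite Hi2 andbT; apply: ltnW.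
have := H i; rewrite /v'; case: eqP => [Him|_]; first by move: Hi1; rewrite Him ltnn.
by apply; rewrite Hi2 andbT; apply: ltnW.
Qed.

Lemma measurable_cylG : @measurable _ OmegaM = <<s cylG >>.
Proof.
rewrite measurableE; apply/seteqP; split.
  apply: smallest_sub; first exact: smallest_sigma_algebra.
  move=> _ [i [b ->]].
  have -> : [set w : Omega | w i = b] = tail_pat i.+1 (fun _ => b) i.
    apply/seteqP; split => w /=.
      move=> H j /andP[H1 H2]; have Hj : j = i by lia.
      by rewrite Hj.
    by move=> H; apply: H; rewrite leqnn ltnSn.
  exact: (@tail_pat_G i.+1 i (ltnSn i)).
apply: smallest_sub; first exact: smallest_sigma_algebra.
move=> _ [->|[n [v ->]]]; first exact: (@measurable0 _ OmegaM).
exact: cyl_meas.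
Qed.

Lemma cylG_setI : setI_closed cylG.
Proof.
have key : forall n m v u, (n <= m)%N -> cylG (cyl n v `&` cyl m u).
  move=> n m v u Hnm.
  case: (pselect (forall i, (i < n)%N -> v i = u i)) => H.
    right; exists m, u; apply/seteqP; split => w /=; first by case.
    by move=> Hw; split => // i Hi; rewrite H // Hw //; apply: leq_trans Hnm.
  left; apply/seteqP; split => w //= [H1 H2]; apply: H => i Hi.
  by rewrite -H1 // H2 //; apply: leq_trans Hnm.
move=> A B [->|[n [v ->]]]; first by rewrite set0I; left.
move=> [->|[m [u ->]]]; first by rewrite setI0; left.
case: (leqP n m) => H; first exact: key.
by rewrite setIC; apply: key; apply: ltnW.
Qed.

Definition flipM (k : nat) : OmegaM -> OmegaM := flip k.

Lemma flipK k : involutive (flip k).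
Proof.
by move=> w; apply: funext => j; rewrite /flip; case: eqP => // _; rewrite negbK.
Qed.

Lemma mflip k : measurable_fun setT (flipM k).
Proof.
apply: (@measurability _ _ OmegaM OmegaM setT (flipM k) coord_events measurableE) => _ [_ [i [b ->]] <-].
rewrite setTI.
have -> : flipM k @^-1` [set w : Omega | w i = b] =
          [set w : OmegaM | w i = (if i == k.-1 then ~~ b else b)].
  apply/seteqP; split => w /=; rewrite /flipM /flip; case: eqP => // _.
    by move=> <-; rewrite negbK.
  by move=> ->; rewrite negbK.
exact: coord_meas.
Qed.

HB.instance Definition _ k := isMeasurableFun.Build _ _ OmegaM OmegaM (flipM k) (mflip k).

Lemma flip_preserves (R : realType) (P : probability OmegaM R) k :
  uniform_product P -> forall A, measurable A -> P (flipM k @^-1` A) = P A.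
Proof.
move=> HU A mA.
have := @measure_unique _ R OmegaM cylG (fun _ => setT) measurable_cylG cylG_setI.
move=> /(_ _ _ (distribution P (flipM k)) P); apply => //.
- move=> _; right; exists 0%N, (fun _ => true).
  by apply/seteqP; split => w //= _ i.
- by apply/seteqP; split => // w _; exists 0%N.
- move=> _ [->|[n [v ->]]]; first by rewrite !measure0.
  change (P (flipM k @^-1` cyl n v) = P (cyl n v)).
  have -> : flipM k @^-1` cyl n v = cyl n (flip k v).
    apply/seteqP; split => w /= H i Hi.
      by rewrite /flip -(H i Hi) /flipM /flip; case: eqP => // _; rewrite negbK.
    by rewrite /flipM /flip H // /flip; case: eqP => // _; rewrite negbK.
  by rewrite !HU.
- by move=> _; change (P (flipM k @^-1` setT) < +oo)%E; rewrite preimage_setT probability_setT ltry.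
Qed.


Lemma fmax_ge (W : {fset nat}) i : i \in W -> (i <= fmax W)%N.
Proof. by move=> Hi; rewrite /fmax; apply: leq_bigmax_seq. Qed.

Arguments fmax_ge {W i}.
Lemma fmax_le (W : {fset nat}) m : (forall i, i \in W -> (i <= m)%N) -> (fmax W <= m)%N.
Proof. by move=> H; apply/bigmax_leqP_seq => i Hi _; apply: H. Qed.

Lemma lexlt_trans s t u : lexlt s t -> lexlt t u -> lexlt s u.
Proof.
elim: s t u => [|x s IH] [|y t] [|z u] //= /orP[H1|/andP[/eqP H1 H1']] /orP[H2|/andP[/eqP H2 H2']].
- by rewrite (ltn_trans H1 H2).
- by rewrite -H2 H1.
- by rewrite H1 H2.
- by rewrite H1 H2 eqxx (IH _ _ H1' H2') orbT.
Qed.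

Arguments lexlt_trans {s t u}.
Lemma lexlt_total s t : s != t -> lexlt s t || lexlt t s.
Proof.
elim: s t => [|x s IH] [|y t] //=.
case: (ltngtP x y) => //= Hxy; rewrite ?orbT //.
subst y; rewrite eqseq_cons eqxx /=; exact: IH.
Qed.

Definition Wlt (W1 W2 : {fset nat}) : bool :=
  [|| (fmax W1 < fmax W2)%N,
      (fmax W1 == fmax W2) && (#|` W1| < #|` W2|)%N |
      [&& fmax W1 == fmax W2, #|` W1| == #|` W2| &
          lexlt (sort leq W1) (sort leq W2)]].

Lemma WleE W1 W2 : Wle W1 W2 = (W1 == W2) || Wlt W1 W2.
Proof. by []. Qed.

Lemma Wlt_trans W1 W2 W3 : Wlt W1 W2 -> Wlt W2 W3 -> Wlt W1 W3.
Proof.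
rewrite /Wlt => /or3P[H|/andP[/eqP H1 H2]|/and3P[/eqP H1 /eqP H2 H3]]
  /or3P[G|/andP[/eqP G1 G2]|/and3P[/eqP G1 /eqP G2 G3]]; apply/or3P;
  try (by apply: Or31; lia);
  try (by apply: Or32; apply/andP; split; [apply/eqP; lia|lia]).
apply: Or33; apply/and3P; split; [apply/eqP; lia|apply/eqP; lia|exact: lexlt_trans H3 G3].
Qed.

Arguments Wlt_trans {W1 W2 W3}.
Lemma Wle_trans W1 W2 W3 : Wle W1 W2 -> Wle W2 W3 -> Wle W1 W3.
Proof.
rewrite !WleE => /orP[/eqP->//|H12] /orP[/eqP<-|H23]; first by rewrite H12 orbT.
by rewrite (Wlt_trans H12 H23) orbT.
Qed.

Arguments Wle_trans {W1 W2 W3}.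
Lemma sort_inj (W1 W2 : {fset nat}) : sort leq W1 = sort leq W2 -> W1 = W2.
Proof.
move=> H; apply/fsetP => x.
by rewrite -(mem_sort leq W1) -(mem_sort leq W2) H.
Qed.

Lemma Wle_total W1 W2 : Wle W1 W2 || Wle W2 W1.
Proof.
rewrite !WleE; case: (eqVneq W1 W2) => [->|Hne]; first by [].
rewrite /Wlt.
case: (boolP (fmax W1 < fmax W2)%N) => H1.
  by apply/orP; left; apply/orP; right; apply/or3P; apply: Or31.
case: (boolP (fmax W2 < fmax W1)%N) => H2.
  by apply/orP; right; apply/orP; right; apply/or3P; apply: Or31.
have H : fmax W1 = fmax W2 by lia.
case: (boolP (#|` W1| < #|` W2|)%N) => C1.
  apply/orP; left; apply/orP; right; apply/or3P; apply: Or32; apply/andP; split => //.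
  by apply/eqP.
case: (boolP (#|` W2| < #|` W1|)%N) => C2.
  apply/orP; right; apply/orP; right; apply/or3P; apply: Or32; apply/andP; split => //.
  by apply/eqP.
have C : #|` W1| = #|` W2| by lia.
have : sort leq W1 != sort leq W2 by apply: contra Hne => /eqP/sort_inj->.
move/lexlt_total/orP => [L|L]; [apply/orP; left|apply/orP; right]; apply/orP; right;
  apply/or3P; apply: Or33; apply/and3P; split => //; apply/eqP => //.
Qed.

Lemma min_list (Q : {fset nat} -> Prop) (L : seq {fset nat}) :
  (exists2 x, x \in L & Q x) ->
  exists x, [/\ x \in L, Q x & forall y, y \in L -> Q y -> Wle x y].
Proof.
elim: L => [[x]//|a L IH] [x Hx HQ].
case: (pselect (exists2 x, x \in L & Q x)) => [/IH [m [Hm Qm Hmin]]|Hno].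
  case/orP: (Wle_total a m) => Ham.
  - case: (pselect (Q a)) => Qa.
      exists a; split => //; first by rewrite inE eqxx.
      move=> y; rewrite inE => /orP[/eqP->|Hy] Qy; first by rewrite WleE eqxx.
      exact: Wle_trans Ham (Hmin _ Hy Qy).
    exists m; split => //; first by rewrite inE Hm orbT.
    by move=> y; rewrite inE => /orP[/eqP->|Hy] Qy; [|apply: Hmin].
  - exists m; split => //; first by rewrite inE Hm orbT.
    by move=> y; rewrite inE => /orP[/eqP->|Hy] Qy; [|apply: Hmin].
exists a; move: Hx; rewrite inE => /orP[/eqP Hxa|HxL]; last by case: Hno; exists x.
subst x; split => //; first by rewrite inE eqxx.
move=> y; rewrite inE => /orP[/eqP->|Hy] Qy; first by rewrite WleE eqxx.
by case: Hno; exists y.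
Qed.

Lemma Wf_spec (R : realType) (P : probability OmegaM R) (f : OmegaM -> bool) w :
  (exists W, fin_witness P f w W) -> fin_witness P f w (Wf P f w).
Proof.
move=> [W0 H0].
pose m := fmax W0.
pose A : {fset nat} := seq_fset tt (iota 0 m.+1).
have inL : forall W : {fset nat}, (fmax W <= m)%N -> W \in fpowerset A.
  move=> W Hm; rewrite fpowersetE; apply/fsubsetP => i Hi.
  rewrite seq_fsetE mem_iota; have := fmax_ge Hi; lia.
have [x [xL Qx Hmin]] := @min_list (fin_witness P f w) (fpowerset A)
  (ex_intro2 _ _ W0 (inL W0 (leqnn _)) H0).
have Hxm : (fmax x <= m)%N.
  apply: fmax_le => i Hi; move: xL; rewrite fpowersetE => /fsubsetP/(_ i Hi).
  rewrite seq_fsetE mem_iota; lia.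
have : [set W | fin_witness P f w W /\ forall W', fin_witness P f w W' -> Wle W W'] (Wf P f w).
  apply: xgetPex; exists x; split => // W' HW'.
  case: (leqP (fmax W') m) => Hm; first by apply: Hmin => //; apply: inL.
  by rewrite WleE /Wlt; apply/orP; right; apply/orP; left; apply: leq_ltn_trans Hxm Hm.
by case.
Qed.

Lemma in_bigsetU (I : finType) (T : Type) (F : I -> set T) i x :
  F i x -> (\big[setU/set0]_(i : I) F i) x.
Proof. by move=> H; rewrite (bigD1 i) //=; left. Qed.

Lemma mF_of (f : OmegaM -> bool) : boolean_function f ->
  forall c, measurable [set v : OmegaM | f v = c].
Proof.
move=> Hf [] //.
rewrite (_ : [set v : OmegaM | f v = false] = ~` [set v : OmegaM | f v]).
  exact: measurableC.
by apply/seteqP; split => v /=; case: (f v).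
Qed.

Lemma witness_cyl (R : realType) (P : probability OmegaM R) (f : OmegaM -> bool) k w W :
  boolean_function f -> fin_witness P f w W -> (fmax W < k)%N ->
  P (cyl k.-1 w `&` [set v | f v = ~~ f w]) = 0%E.
Proof.
move=> Hf [Hpos [A [mA [PA HA]]]] Hlt.
have mS : measurable (cyl k.-1 w `&` [set v | f v = ~~ f w]).
  by apply: measurableI; [exact: cyl_meas|exact: mF_of].
have sub : cyl k.-1 w `&` [set v | f v = ~~ f w] `<=` ~` A.
  move=> v [Hc Hne] Av.
  have : f v = f w.
    apply: HA => // i Hi; rewrite /coord; apply: Hc.
    have := fmax_ge Hi; have := Hpos i Hi; lia.
  by rewrite Hne; case: (f w).
have := le_measure P (mem_set mS) (mem_set (measurableC mA)) sub.
move=> H.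
have HC : P (~` A) = 0%E by rewrite probability_setC // PA subee.
apply/eqP; rewrite eq_le measure_ge0 andbT -HC; exact: H.
Qed.

Arguments witness_cyl {R P f k w W}.
Arguments Wf_spec {R P f w}.
Arguments flip_preserves {R P k}.

Theorem mainTheorem11 (R : realType) (P : probability OmegaM R)
  (f : OmegaM -> bool) (p : R) :
  uniform_product P -> boolean_function f -> 0 < p -> knowable P f p ->
  forall k : nat, (0 < k)%N ->
    (influence P f k <= EmaxWp P f p * ((k%:R `^ p)^-1)%:E)%E.
Proof.
move=> HU Hf p0 [Hfin HE] k k0.
pose j := k.-1.
pose tovec (x : {ffun 'I_j -> bool}) : Omega :=
  fun l => if (insub l : option 'I_j) is Some i then x i else false.
pose Zc (t : {ffun 'I_j -> bool} * bool) : set OmegaM :=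
  cyl j (tovec t.1) `&` [set v | f v = t.2].
have mZc t : measurable (Zc t).
  by apply: measurableI; [exact: cyl_meas|exact: mF_of].
pose Y := \big[setU/set0]_(t : {ffun 'I_j -> bool} * bool)
            (if P (Zc t) == 0%E then Zc t else set0).
have mY : measurable Y.
  rewrite /Y; elim/big_ind: _; first exact: measurable0.
    by move=> ? ? ? ?; exact: measurableU.
  by move=> t _; case: ifP => _ //; exact: measurable0.
have nY : P.-negligible Y.
  rewrite /Y; elim/big_ind: _; first exact: negligible_set0.
    by move=> ? ? ? ?; exact: negligibleU.
  move=> t _; case: ifP => [/eqP H|_]; last exact: negligible_set0.
  by exists (Zc t); split.
have PY : P Y = 0%E by apply: measure_negligible.
have mfY : measurable (flipM k @^-1` Y).
  by rewrite -[X in measurable X]setTI; apply: mflip.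
have PfY : P (flipM k @^-1` Y) = 0%E by rewrite (flip_preserves HU).
have key : forall w, (exists W, fin_witness P f w W) -> f (flip k w) != f w ->
    (fmax (Wf P f w) < k)%N -> Y (flip k w).
  move=> w Hex Hne Hlt.
  have P0 := witness_cyl Hf (Wf_spec Hex) Hlt.
  pose t := ([ffun i : 'I_j => w i], f (flip k w)).
  have Hfl : f (flip k w) = ~~ f w by move: Hne; case: (f w); case: (f (flip k w)).
  have Zt : Zc t = cyl k.-1 w `&` [set v | f v = ~~ f w].
    rewrite /Zc /t /= Hfl; congr (_ `&` _).
    apply/seteqP; split => v /= H l Hl; rewrite H //.
      by rewrite /tovec insubT /= ffunE.
    by rewrite /tovec insubT /= ffunE.
  apply: (@in_bigsetU _ _ _ t).
  rewrite Zt P0 eqxx -Zt; split => //=.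
  move=> l Hl; have Hlk : l != k.-1 by move: Hl; rewrite /j; case: eqP => // ->; rewrite ltnn.
  by rewrite /tovec insubT /= ffunE /flip (negbTE Hlk).
pose G := [set w : OmegaM | exists W, fin_witness P f w W].
have nG : P.-negligible (~` G) := Hfin.
pose D := [set w : OmegaM | f (flip k w) != f w].
have mD : measurable D.
  have mFt c : measurable (flipM k @^-1` [set v : OmegaM | f v = c]).
    by rewrite -[X in measurable X]setTI; apply: mflip => //; exact: mF_of.
  rewrite (_ : D = (flipM k @^-1` [set v | f v = true] `&` [set v | f v = false]) `|`
                   (flipM k @^-1` [set v | f v = false] `&` [set v | f v = true])).
    by apply: measurableU; apply: measurableI => //; exact: mF_of.
  apply/seteqP; split => w; rewrite /D /flipM /=;
    case: (f w); case: (f (flip k w)) => //=; try tauto; by move=> [[]|[]].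
have [N' [mN' PN' subN]] : P.-negligible (~` G `|` flipM k @^-1` Y).
  by apply: negligibleU => //; exists (flipM k @^-1` Y); split.
pose M := D `\` N'.
have mM : measurable M by apply: measurableD.
have DM : (P D <= P M)%E.
  have : (P D <= P (M `|` N'))%E.
    apply: le_measure; rewrite ?inE //; first exact: measurableU.
    by move=> w Dw; case: (pselect (N' w)) => HN; [right|left].
  by rewrite (measureU0 mM mN' PN').
have SM : forall w, M w -> (k <= fmax (Wf P f w))%N.
  move=> w [Dw NN]; rewrite leqNgt; apply/negP => Hlt.
  have Gw : G w by apply: contrapT => Gw; apply: NN; apply: subN; left.
  by apply: NN; apply: subN; right; apply: key.
have r0 : 0 < k%:R `^ p :> R by apply: powR_gt0; rewrite ltr0n.
have HM : ((k%:R `^ p)%:E * P M <= EmaxWp P f p)%E.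
  rewrite /EmaxWp ge0_integralE; last by move=> x _; rewrite lee_fin powR_ge0.
  pose h := scale_nnsfun (indic_nnsfun R mM) (ltW r0).
  apply: le_trans (ereal_sup_ubound _); last first.
    exists h => //= x; rewrite patch_setT measurable_realfun.mindicE /=.
    case: (pselect (M x)) => Mx.
      rewrite mem_set // mulr1 lee_fin; apply: ge0_ler_powR => //; first exact: ltW.
      - by rewrite nnegrE.
      - by rewrite nnegrE.
      by rewrite ler_nat; apply: SM.
    by rewrite memNset // mulr0 lee_fin powR_ge0.
  by rewrite sintegralrM /measurable_realfun.mindic sintegral_indic.
rewrite lee_pdivlMr //.
apply: le_trans HM; rewrite muleC.
by apply: lee_wpmul2l => //; rewrite lee_fin ltW.
Qed.
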